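(* Let $\mathcal{C}_1$ and $\mathcal{C}_2$ be nice GFG-tNCWs with $L(\mathcal{C}_1)=L(\mathcal{C}_2)$, each minimal (no GFG-tNCW for the same language has fewer states) and each $\alpha$-maximal. Then $\mathcal{C}_1$ and $\mathcal{C}_2$ are isomorphic.
   Context: A tNCW is $\mathcal{A}=\langle\Sigma,Q,q_0,\delta,\alpha\rangle$: finite alphabet $\Sigma$, finite state set $Q$, initial state $q_0$, transition function $\delta:Q\times\Sigma\to 2^Q\setminus\{\emptyset\}$ with transition relation $\Delta=\{\langle q,\sigma,s\rangle:s\in\delta(q,\sigma)\}$, and $\alpha\subseteq\Delta$; $|\mathcal{A}|=|Q|$. $\alpha$-transitions are those in $\alpha$, $\bar\alpha$-transitions those in $\Delta\setminus\alpha$; $\delta^{\alpha}(q,\sigma)$, $\delta^{\bar\alpha}(q,\sigma)$ denote the $\sigma$-successors via $\alpha$-, resp. $\bar\alpha$-transitions. A run on $w=\sigma_1\sigma_2\cdots$ is $r_0r_1\cdots$ with $r_0=q_0$, $r_{i+1}\in\delta(r_i,\sigma_{i+1})$; accepting iff it traverses $\alpha$-transitions only finitely often; $L(\mathcal{A})$ is the accepted language. $\mathcal{A}^q$ is $\mathcal{A}$ with initial state $q$; $q\sim s$ iff $L(\mathcal{A}^q)=L(\mathcal{A}^s)$. $\mathcal{A}$ is GFG if there is $f:\Sigma^*\to Q$ with $f(\epsilon)=q_0$, $\langle f(u),\sigma,f(u\sigma)\rangle\in\Delta$ for all $u,\sigma$, and for every $w\in L(\mathcal{A})$ the run $f(w[1,0]),f(w[1,1]),\dots$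 is accepting; $q$ is GFG if $\mathcal{A}^q$ is. $\mathcal{A}$ is semantically deterministic if all $\sigma$-successors of any state are pairwise $\sim$-equivalent; safe deterministic if $|\delta^{\bar\alpha}(q,\sigma)|\le1$ always; normal if whenever a path of $\bar\alpha$-transitions leads from $q$ to $s$, one also leads from $s$ to $q$. Nice: all states reachable and GFG, and normal, safe deterministic, semantically deterministic. A triple $\langle q,\sigma,s\rangle\in Q\times\Sigma\times Q$ is an allowed transition of $\mathcal{A}$ if there is $s'\in Q$ with $s\sim s'$ and $\langle q,\sigma,s'\rangle\in\Delta$. $\mathcal{A}$ is $\alpha$-maximal if every allowed transition of $\mathcal{A}$ is in $\Delta$. For tNCWs $\mathcal{A},\mathcal{B}$, a bijection $\kappa:Q_\mathcal{A}\to Q_\mathcal{B}$ is $\bar\alpha$-transition respecting if for all $q,q',\sigma$: $q'\in\delta^{\bar\alpha}_\mathcal{A}(q,\sigma)$ iff $\kappa(q')\in\delta^{\bar\alpha}_\mathcal{B}(\kappa(q),\sigma)$, and $\alpha$-transition respecting if the same holds with $\delta^{\alpha}$ in place of $\delta^{\bar\alpha}$. $\mathcal{A}$ and $\mathcal{B}$ are isomorphic if there is a bijection that is both $\alpha$- and $\bar\alpha$-transition respecting. *)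

(* Defs.v *)
From mathcomp Require Import all_boot.
Set Implicit Arguments. Unset Strict Implicit. Unset Printing Implicit Defensive.

Record tNCW (Sigma : finType) := TNCW {
  state : finType;
  q0 : state;
  delta : state -> Sigma -> {set state};
  delta_ne : forall q a, delta q a != set0;
  alpha : state -> Sigma -> state -> bool;
  alpha_sub : forall q a s, alpha q a s -> s \in delta q a
}.

Section Defs.
Variables (Sigma : finType) (A : tNCW Sigma).
Local Notation Q := (state A).

(* infinite words w = sigma_1 sigma_2 ... with w i = sigma_(i+1) *)
Definition word := nat -> Sigma.

Definition size_tNCW := #|Q|.

Definition run_from (q : Q) (w : word) (r : nat -> Q) : Prop :=
  r 0 = q /\ forall i, r i.+1 \in delta (r i) (w i).

Definition accepting_run (w : word) (r : nat -> Q) : Prop :=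
  exists N, forall i, N <= i -> ~~ alpha (r i) (w i) (r i.+1).

Definition accepts_from (q : Q) (w : word) : Prop :=
  exists r, run_from q w r /\ accepting_run w r.

Definition accepts (w : word) : Prop := accepts_from (q0 A) w.

Definition equiv_st (q s : Q) : Prop := forall w, accepts_from q w <-> accepts_from s w.

Definition prefix (w : word) (i : nat) : seq Sigma := mkseq w i.

Definition GFG_from (q : Q) : Prop :=
  exists f : seq Sigma -> Q,
    f [::] = q /\
    (forall u a, f (rcons u a) \in delta (f u) a) /\
    (forall w, accepts_from q w -> accepting_run w (fun i => f (prefix w i))).

Definition GFG : Prop := GFG_from (q0 A).

Definition sem_det : Prop :=
  forall q a s s', s \in delta q a -> s' \in delta q a -> equiv_st s s'.

Definition delta_bar (q : Q) (a : Sigma) : {set Q} :=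
  [set s in delta q a | ~~ alpha q a s].
Definition delta_alpha (q : Q) (a : Sigma) : {set Q} :=
  [set s in delta q a | alpha q a s].

Definition safe_det : Prop := forall q a, #|delta_bar q a| <= 1.

Definition bar_edge : rel Q := fun q s => [exists a, s \in delta_bar q a].
Definition any_edge : rel Q := fun q s => [exists a, s \in delta q a].

Definition normal : Prop :=
  forall q s, connect bar_edge q s -> connect bar_edge s q.

Definition all_reachable : Prop := forall q, connect any_edge (q0 A) q.

Definition nice : Prop :=
  all_reachable /\ (forall q, GFG_from q) /\ normal /\ safe_det /\ sem_det.

Definition allowed (q : Q) (a : Sigma) (s : Q) : Prop :=
  exists s', equiv_st s s' /\ s' \in delta q a.

Definition alpha_maximal : Prop :=
  forall q a s, allowed q a s -> s \in delta q a.

End Defs.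

Definition same_lang (Sigma : finType) (A B : tNCW Sigma) : Prop :=
  forall w, accepts A w <-> accepts B w.

Definition minimal_GFG (Sigma : finType) (A : tNCW Sigma) : Prop :=
  forall B : tNCW Sigma, GFG B -> same_lang B A -> size_tNCW A <= size_tNCW B.

Definition isomorphic (Sigma : finType) (A B : tNCW Sigma) : Prop :=
  exists kappa : state A -> state B,
    bijective kappa /\
    (forall q q' a, q' \in delta_bar q a <-> kappa q' \in delta_bar (kappa q) a) /\
    (forall q q' a, q' \in delta_alpha q a <-> kappa q' \in delta_alpha (kappa q) a).

(* Main.v *)
Require Import Defs.
From mathcomp Require Import all_boot.
From Stdlib Require Import FunctionalExtensionality ClassicalEpsilon Classical.
Set Implicit Arguments. Unset Strict Implicit. Unset Printing Implicit Defensive.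

Section Words.
Variable Sigma : finType.

Definition shift (w : word Sigma) n : word Sigma := fun i => w (n + i).
Definition wcat (u : seq Sigma) (w : word Sigma) : word Sigma :=
  fun i => nth (w (i - size u)) u i.

Lemma prefixS (w : word Sigma) i : Defs.prefix w i.+1 = rcons (Defs.prefix w i) (w i).
Proof. by rewrite /Defs.prefix mkseqS. Qed.

Lemma size_pref (w : word Sigma) n : size (Defs.prefix w n) = n.
Proof. by rewrite /Defs.prefix size_mkseq. Qed.

Lemma prefix_add (w : word Sigma) n k :
  Defs.prefix w (n + k) = Defs.prefix w n ++ Defs.prefix (shift w n) k.
Proof.
elim: k => [|k IH]; first by rewrite addn0 cats0.
by rewrite addnS !prefixS IH rcons_cat.
Qed.

Lemma prefix_wcat u (w : word Sigma) : Defs.prefix (wcat u w) (size u) = u.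
Proof.
apply: (@eq_from_nth _ (w 0)); first by rewrite size_pref.
move=> i; rewrite size_pref => hi.
by rewrite /Defs.prefix nth_mkseq // /wcat (set_nth_default (w 0)).
Qed.

Lemma shift_wcat u (w : word Sigma) : shift (wcat u w) (size u) = w.
Proof.
apply: functional_extensionality => i.
by rewrite /shift /wcat nth_default ?leq_addr // addKn.
Qed.

Lemma wcat0 (w : word Sigma) : wcat [::] w = w.
Proof. by apply: functional_extensionality => i; rewrite /wcat nth_nil subn0. Qed.

Lemma wcat_cons a u (w : word Sigma) : shift (wcat (a :: u) w) 1 = wcat u w.
Proof. by apply: functional_extensionality => i; rewrite /shift /wcat add1n. Qed.

Lemma shift0 (w : word Sigma) : shift w 0 = w.
Proof. by apply: functional_extensionality => i; rewrite /shift add0n. Qed.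

Lemma shiftS (w : word Sigma) n : shift (shift w n) 1 = shift w n.+1.
Proof. by apply: functional_extensionality => i; rewrite /shift addnA addn1. Qed.

Definition Leq (X Y : tNCW Sigma) (x : state X) (y : state Y) :=
  forall w, accepts_from x w <-> accepts_from y w.

End Words.

Section Gen.
Variables (Sigma : finType) (X : tNCW Sigma).
Local Notation Q := (state X).

Fixpoint reach (q : Q) (u : seq Sigma) (q' : Q) : Prop :=
  match u with
  | [::] => q = q'
  | a :: u' => exists2 s, s \in delta q a & reach s u' q'
  end.

Definition bstep (q : Q) (a : Sigma) : option Q := [pick s in delta_bar q a].

Fixpoint bpath (q : Q) (u : seq Sigma) : option Q :=
  match u with
  | [::] => Some q
  | a :: u' => if bstep q a is Some s then bpath s u' else None
  end.

Definition Fw (q : Q) (u : seq Sigma) : bool := bpath q u != None.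

Lemma in_dbar (q : Q) a s : (s \in delta_bar q a) = (s \in delta q a) && ~~ alpha q a s.
Proof. by rewrite inE. Qed.

Lemma bpath_cat (q : Q) u v : bpath q (u ++ v) = obind (fun s => bpath s v) (bpath q u).
Proof.
elim: u q => [|a u IH] q //=. by case: (bstep q a).
Qed.

Lemma bpath_rcons (q : Q) u a : bpath q (rcons u a) = obind (fun s => bstep s a) (bpath q u).
Proof.
rewrite -cats1 bpath_cat; case: (bpath q u) => //= s.
by case: (bstep s a).
Qed.

Lemma bstep_in (q : Q) a s : bstep q a = Some s -> s \in delta_bar q a.
Proof. by rewrite /bstep; case: pickP => // x hx [<-]. Qed.

Hypothesis sd : safe_det X.

Lemma bstep_eq (q : Q) a s : s \in delta_bar q a -> bstep q a = Some s.
Proof.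
move=> hs; rewrite /bstep; case: pickP => [x hx|h]; last by rewrite h in hs.
congr Some.
have := card_le1_eqP (sd q a).
move=> H; exact: H.
Qed.


Lemma Fw_cons (q : Q) a u :
  Fw q (a :: u) <-> exists2 s, s \in delta_bar q a & Fw s u.
Proof.
rewrite /Fw /=; split.
  by case E: (bstep q a) => [s|] // h; exists s => //; exact: bstep_in.
by case=> s /bstep_eq -> .
Qed.

Lemma Fw_cat (q q' : Q) u v : bpath q u = Some q' -> Fw q (u ++ v) = Fw q' v.
Proof. by rewrite /Fw bpath_cat => ->. Qed.

Lemma Fw_nil (q : Q) : Fw q [::].
Proof. by []. Qed.

Lemma Fw_take (q : Q) u n : Fw q u -> Fw q (take n u).
Proof.
rewrite /Fw -{1}(cat_take_drop n u) bpath_cat.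
by case: (bpath q (take n u)).
Qed.

Lemma bpath_reach (q q' : Q) u : bpath q u = Some q' -> reach q u q'.
Proof.
elim: u q => [|a u IH] q /=; first by case.
case E: (bstep q a) => [s|] // h; exists s; last exact: IH.
by have := bstep_in E; rewrite in_dbar => /andP[].
Qed.

Lemma bpath_connect (q q' : Q) u : bpath q u = Some q' -> connect (@bar_edge _ X) q q'.
Proof.
elim: u q => [|a u IH] q /=; first by case=> ->.
case E: (bstep q a) => [s|] // h.
apply: connect_trans (IH _ h); apply: connect1.
by apply/existsP; exists a; exact: bstep_in.
Qed.

Lemma connect_bpath (q q' : Q) : connect (@bar_edge _ X) q q' -> exists u, bpath q u = Some q'.
Proof.
move=> /connectP[p hp ->]; elim: p q hp => [|s p IH] q /=; first by exists [::].
case/andP=> /existsP[a ha] /IH[u hu]; exists (a :: u) => /=.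
by rewrite (bstep_eq ha).
Qed.

End Gen.

Section Gen2.
Variables (Sigma : finType) (X : tNCW Sigma).
Local Notation Q := (state X).

Lemma connect_reach (q q' : Q) : connect (@any_edge _ X) q q' -> exists u, reach q u q'.
Proof.
move=> /connectP[p hp ->]; elim: p q hp => [|s p IH] q /=; first by exists [::].
case/andP=> /existsP[a ha] /IH[u hu]; exists (a :: u) => /=.
by exists s.
Qed.

Lemma reach_rcons (q s s' : Q) u a : reach q u s -> s' \in delta s a -> reach q (rcons u a) s'.
Proof.
elim: u q => [|b u IH] q /=; first by move=> -> h; exists s'.
by case=> t ht hr hs; exists t => //; exact: IH.
Qed.

Lemma strat_reach (f : seq Sigma -> Q) q :
  f [::] = q -> (forall u a, f (rcons u a) \in delta (f u) a) ->
  forall u, reach q u (f u).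
Proof.
move=> h0 hs; elim/last_ind => [|u a IH] /=; first by [].
exact: reach_rcons IH (hs u a).
Qed.

Lemma strat_run (f : seq Sigma -> Q) q w :
  f [::] = q -> (forall u a, f (rcons u a) \in delta (f u) a) ->
  run_from q w (fun i => f (Defs.prefix w i)).
Proof.
move=> h0 hs; split => // i; rewrite prefixS; exact: hs.
Qed.

Hypothesis semd : sem_det X.

Lemma acc_step (q s : Q) w : s \in delta q (w 0) ->
  (accepts_from q w <-> accepts_from s (shift w 1)).
Proof.
move=> hs; split.
  case=> r [[r0 hr] [N hN]].
  have h1 : r 1 \in delta q (w 0) by rewrite -r0; exact: hr.
  apply/(semd h1 hs); exists (fun i => r (1 + i)); split.
    split => // i; rewrite /shift addnS; exact: hr.
  exists N => i hi; rewrite /shift addnS; apply: hN.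
  by rewrite add1n ltnW.
case=> r [[r0 hr] [N hN]].
exists (fun i => if i is j.+1 then r j else q); split.
  split => // -[|j] /=; first by rewrite r0.
  exact: hr.
exists N.+1 => -[|i] //= hi; exact: hN.
Qed.

Lemma acc_reach (q q' : Q) u w : reach q u q' ->
  (accepts_from q (wcat u w) <-> accepts_from q' w).
Proof.
elim: u q => [|a u IH] q /=; first by move=> ->; rewrite wcat0.
case=> s hs hr.
rewrite (acc_step (s := s)) ?wcat_cons; first exact: IH.
by [].
Qed.

Lemma acc_run (q : Q) w r n : run_from q w r ->
  (accepts_from q w <-> accepts_from (r n) (shift w n)).
Proof.
case=> r0 hr; elim: n => [|n IH]; first by rewrite r0 shift0.
rewrite IH (acc_step (s := r n.+1)) ?shiftS //.
by rewrite /shift addn0; exact: hr.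
Qed.

End Gen2.

Section Gen3.
Variables (Sigma : finType) (X : tNCW Sigma).
Local Notation Q := (state X).

Lemma safe_closure (q : Q) y : (forall k, Fw q (Defs.prefix y k)) -> accepts_from q y.
Proof.
move=> hk.
exists (fun k => odflt q (bpath q (Defs.prefix y k))); split; last first.
  exists 0 => k _.
  have := hk k.+1; rewrite /Fw prefixS bpath_rcons.
  case E: (bpath q (Defs.prefix y k)) => [s|] //=.
  case E2: (bstep s (y k)) => [s'|] //= _.
  by have := bstep_in E2; rewrite in_dbar => /andP[].
split => // k.
have := hk k.+1; rewrite /Fw prefixS bpath_rcons.
case E: (bpath q (Defs.prefix y k)) => [s|] //=.
case E2: (bstep s (y k)) => [s'|] //= _.
by have := bstep_in E2; rewrite in_dbar => /andP[].
Qed.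

Hypothesis sd : safe_det X.

Lemma run_bpath (q : Q) w r N k : run_from q w r ->
  (forall i, N <= i < N + k -> ~~ alpha (r i) (w i) (r i.+1)) ->
  bpath (r N) (Defs.prefix (shift w N) k) = Some (r (N + k)).
Proof.
case=> r0 hr; elim: k => [|k IH] hk; first by rewrite addn0.
rewrite prefixS bpath_rcons IH /=; last first.
  by move=> i /andP[h1 h2]; apply: hk; rewrite h1 (leq_trans h2) // addnS.
rewrite addnS; apply: bstep_eq => //; rewrite in_dbar /shift hr /=.
by apply: hk; rewrite leq_addr /= addnS.
Qed.

Hypothesis semd : sem_det X.
Hypothesis amax : alpha_maximal X.

Lemma delta_char (q s : Q) a :
  s \in delta q a <-> (forall w, accepts_from s w <-> accepts_from q (wcat [:: a] w)).
Proof.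
split.
  move=> hs w; rewrite (acc_reach semd (q' := s)) //; by exists s.
move=> h; have /set0Pn[s0 hs0] := delta_ne q a.
apply: amax; exists s0; split => // w.
rewrite h (acc_reach semd (q' := s0)) //; by exists s0.
Qed.

End Gen3.

Lemma Leq_reach (Sigma : finType) (X Y : tNCW Sigma) (x x' : state X) (y y' : state Y) u :
  sem_det X -> sem_det Y -> Leq x y -> reach x u x' -> reach y u y' -> Leq x' y'.
Proof.
move=> sX sY hxy hx hy w.
by rewrite -(acc_reach sX w hx) -(acc_reach sY w hy).
Qed.

Section Reduce.
Variables (Sigma : finType) (A : tNCW Sigma).
Local Notation Q := (state A).
Hypothesis nA : nice A.
Hypothesis amA : alpha_maximal A.
Variables (R : {set Q}) (g : Q -> Q).
Hypothesis hgR : forall s, g s \in R.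
Hypothesis G1 : forall s, equiv_st s (g s).
Hypothesis G2 : forall s u, Fw s u -> Fw (g s) u.
Hypothesis G3 : forall t a s, t \in R -> s \in delta_bar t a -> forall u, Fw (g s) u -> Fw s u.

Let sdA : safe_det A. Proof. by case: nA => _ [_ [_ []]]. Qed.
Let semA : sem_det A. Proof. by case: nA => _ [_ [_ []]]. Qed.

Definition stB := {x : Q | x \in R}.
Definition G (s : Q) : stB := exist _ (g s) (hgR s).
Definition dB (x : stB) a : {set stB} := [set G s | s in delta (val x) a].
Definition dbB (x : stB) a : {set stB} := [set G s | s in delta_bar (val x) a].
Definition aB (x : stB) a (y : stB) := (y \in dB x a) && (y \notin dbB x a).

Lemma dB_ne x a : dB x a != set0.
Proof.
have /set0Pn[s hs] := delta_ne (val x) a.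
by apply/set0Pn; exists (G s); apply: imset_f.
Qed.

Lemma aB_sub x a y : aB x a y -> y \in dB x a.
Proof. by case/andP. Qed.

Definition B : tNCW Sigma := @TNCW Sigma stB (G (q0 A)) dB dB_ne aB aB_sub.

Lemma dbB_sub x a : dbB x a \subset dB x a.
Proof.
apply/subsetP => y /imsetP[s hs ->]; apply: imset_f.
by move: hs; rewrite in_dbar => /andP[].
Qed.

Lemma dbarB (x : state B) a : delta_bar x a = dbB x a.
Proof.
apply/setP => y; rewrite inE /= /aB.
case hy: (y \in dbB x a); first by rewrite (subsetP (dbB_sub x a) y hy).
by case: (y \in dB x a).
Qed.

Lemma sdB : safe_det B.
Proof. by move=> x a; rewrite dbarB (leq_trans (leq_imset_card _ _)) //; exact: sdA. Qed.

Lemma FwB u (x : state B) : Fw x u = Fw (val x) u.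
Proof.
apply/idP/idP.
  elim: u x => [|a u IH] x //.
  case/(Fw_cons sdB) => y; rewrite dbarB => /imsetP[s hs ->] /IH /= h.
  apply/(Fw_cons sdA); exists s => //; exact: (G3 (valP x) hs).
elim: u x => [|a u IH] x //.
case/(Fw_cons sdA) => s hs /G2 h.
apply/(Fw_cons sdB); exists (G s); first by rewrite dbarB imset_f.
exact: (IH (G s)).
Qed.

Lemma accB_A (x : state B) w : accepts_from x w -> accepts_from (val x) w.
Proof.
case=> r [[r0 hr] [N hN]].
have step : forall i, accepts_from (val (r 0)) w <-> accepts_from (val (r i)) (shift w i).
  elim=> [|i IH]; first by rewrite shift0.
  rewrite IH.
  have /imsetP[s hs ->] := hr i.
  rewrite (acc_step semA (s := s)) ?shiftS; last by rewrite /shift addn0.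
  exact: G1.
rewrite -r0 step; apply: (safe_closure (y := shift w N) (q := val (r N))) => k.
rewrite -FwB /Fw (run_bpath sdB (q := x) (k := k) (conj r0 hr)) //.
by move=> i /andP[hi _]; apply: hN.
Qed.

Let gfgA : GFG_from (q0 A). Proof. by case: nA => _ [h _]; exact: h. Qed.
Let fA := proj1_sig (constructive_indefinite_description _ gfgA).
Let hfA : fA [::] = q0 A /\
    (forall u a, fA (rcons u a) \in delta (fA u) a) /\
    (forall w, accepts_from (q0 A) w -> accepting_run w (fun i => fA (Defs.prefix w i))).
Proof. exact: (proj2_sig (constructive_indefinite_description _ gfgA)). Qed.

Definition RelF (r : Q) (x : stB) := forall u, Fw r u -> Fw (val x) u.

Definition next (x : stB) (v : seq Sigma) (a : Sigma) : stB :=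
  if excluded_middle_informative (~~ alpha (fA v) a (fA (rcons v a)) /\ RelF (fA v) x) then
    (if [pick y in dbB x a] is Some y then y else G (fA (rcons v a)))
  else G (fA (rcons v a)).

Fixpoint aux (x : stB) (v : seq Sigma) (u : seq Sigma) : stB :=
  match u with [::] => x | a :: u' => aux (next x v a) (rcons v a) u' end.

Definition fB u := aux (G (q0 A)) [::] u.

Lemma aux_rcons x v u a : aux x v (rcons u a) = next (aux x v u) (v ++ u) a.
Proof.
elim: u x v => [|b u IH] x v /=; first by rewrite cats0.
by rewrite IH cat_rcons.
Qed.

Lemma fB_rcons u a : fB (rcons u a) = next (fB u) u a.
Proof. by rewrite /fB aux_rcons. Qed.

Lemma next_spec x v a : (next x v a \in dbB x a) \/ (next x v a = G (fA (rcons v a))).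
Proof.
rewrite /next; case: excluded_middle_informative => [hh|hh]; last by right.
by case: pickP => [y hy|_]; [left|right].
Qed.

Lemma fB_inv u : forall w, accepts_from (val (fB u)) w <-> accepts_from (fA u) w.
Proof.
case: hfA => h0 [hs _].
elim/last_ind: u => [|u a IH] w.
  by rewrite /fB /= h0; symmetry; apply: G1.
rewrite fB_rcons; case: (next_spec (fB u) u a) => [/imsetP[s hs' ->]|->] /=; last first.
  by symmetry; apply: G1.
have hsd : s \in delta (val (fB u)) a by move: hs'; rewrite in_dbar => /andP[].
rewrite -(G1 s w).
have := (delta_char semA amA _ _ _).1 hsd w; move=> ->.
rewrite IH; symmetry; exact: (delta_char semA amA _ _ _).1 (hs u a) w.
Qed.

Lemma fB_step u a : fB (rcons u a) \in dB (fB u) a.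
Proof.
case: hfA => h0 [hs _].
rewrite fB_rcons; case: (next_spec (fB u) u a) => [h|->].
  exact: (subsetP (dbB_sub _ _)).
apply: imset_f; apply/(delta_char semA amA) => w.
rewrite (delta_char semA amA _ _ _).1 ?hs //; symmetry; exact: fB_inv.
Qed.

Lemma next_good x v a : ~~ alpha (fA v) a (fA (rcons v a)) ->
  RelF (fA (rcons v a)) (next x v a) /\ (RelF (fA v) x -> next x v a \in dbB x a).
Proof.
case: hfA => h0 [hs _] hna.
have hbar : fA (rcons v a) \in delta_bar (fA v) a by rewrite in_dbar hs.
rewrite /next; case: excluded_middle_informative => [[hh hR]|hn]; last first.
  split; first by move=> u /G2.
  by move=> hR; exfalso; apply: hn.
case: pickP => [y hy|hn].
  split => //.
  move=> u hu; have: Fw (fA v) (a :: u) by apply/(Fw_cons sdA); exists (fA (rcons v a)).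
  move/hR/(Fw_cons sdA) => [s hs1 hs2].
  move: hy => /imsetP[s' hs' ->] /=.
  have -> : s' = s by have := card_le1_eqP (sdA (val x) a); move=> H; exact: H.
  exact: G2.
exfalso.
have: Fw (fA v) [:: a] by apply/(Fw_cons sdA); exists (fA (rcons v a)).
move/hR/(Fw_cons sdA) => [s hs1 _].
by have := hn (G s); rewrite imset_f.
Qed.

Lemma fB_acc w : accepts_from (q0 A) w -> @accepting_run _ B w (fun i => fB (Defs.prefix w i)).
Proof.
case: hfA => h0 [hs hacc] /hacc [N hN].
have hR : forall i, N < i -> RelF (fA (Defs.prefix w i)) (fB (Defs.prefix w i)).
  case=> // i hi; rewrite prefixS fB_rcons.
  have := hN i hi; rewrite /= prefixS => hh; exact: (next_good _ hh).1.
exists N.+1 => i hi; rewrite /= prefixS fB_rcons.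
have := hN i (ltnW hi); rewrite prefixS => hh; have := (next_good (fB (Defs.prefix w i)) hh).2 (hR i hi).
rewrite /aB => ->; by rewrite andbF.
Qed.

Lemma B_GFG : GFG B.
Proof.
exists fB; split => //; split; first exact: fB_step.
move=> w /accB_A h; apply: fB_acc; exact/G1.
Qed.

Lemma B_lang : same_lang B A.
Proof.
move=> w; split; first by move/accB_A => h; apply/G1.
move=> h; exists (fun i => fB (Defs.prefix w i)); split; last exact: fB_acc.
apply: strat_run => //; exact: fB_step.
Qed.

Lemma reduce : minimal_GFG A -> forall s, s \in R.
Proof.
move=> hmin s; apply/negPn/negP => hs.
have := hmin B B_GFG B_lang; rewrite /size_tNCW /= card_sig.
have : R \proper [set: Q].
  by rewrite properT; apply/eqP => hR; rewrite hR inE in hs.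
move/proper_card; rewrite cardsT => h1 h2.
have : #|[pred x | x \in R]| = #|R| by apply: eq_card.
by move=> e; move: h2; rewrite e leqNgt h1.
Qed.

End Reduce.

Lemma reach_cat (Sigma : finType) (X : tNCW Sigma) (q s t : state X) u v :
  reach q u s -> reach s v t -> reach q (u ++ v) t.
Proof.
elim: u q => [|a u IH] q /=; first by move=> ->.
by case=> r hr h1 h2; exists r => //; exact: IH.
Qed.

Lemma cat_cancel (T : Type) (x s1 s2 : seq T) : x ++ s1 = x ++ s2 -> s1 = s2.
Proof. by move=> h; have := congr1 (drop (size x)) h; rewrite !drop_size_cat. Qed.

Lemma take_prefix (Sigma : finType) (w : word Sigma) k K : k <= K ->
  take k (Defs.prefix w K) = Defs.prefix w k.
Proof.
move=> h; rewrite -(subnKC h) prefix_add take_size_cat // size_pref //.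
Qed.

Section Dom.
Variables (Sigma : finType) (C1 C2 : tNCW Sigma).
Hypotheses (n1 : nice C1) (n2 : nice C2) (hl : same_lang C1 C2).

Lemma dominate (p : state C1) :
  exists q : state C2, Leq p q /\ (forall u, Fw p u -> Fw q u).
Proof.
case: n1 => reach1 [gfg1 [norm1 [sd1 sem1]]].
case: n2 => reach2 [gfg2 [norm2 [sd2 sem2]]].
apply: NNPP => hn.
have H : forall q : state C2, Leq p q -> exists u, Fw p u /\ ~~ Fw q u.
  move=> q hq; apply: NNPP => hn2; apply: hn; exists q; split => // u hu.
  apply: NNPP => hu2; apply: hn2; exists u; split => //; exact/negP.
have [x0 hx0] := connect_reach (reach1 p).
case: (gfg2 (q0 C2)) => f2 [f20 [f2s f2acc]].
have inv : forall v, reach (q0 C1) v p -> Leq p (f2 v).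
  move=> v hv; apply: (Leq_reach sem1 sem2 _ hv (strat_reach f20 f2s v)).
  exact: hl.
have hb : forall q : state C2, exists b : seq Sigma, Leq p q ->
    bpath p b = Some p /\ exists2 n, n <= size b & ~~ Fw q (take n b).
  move=> q; case: (classic (Leq p q)) => hq; last by exists [::].
  have [u [hu1 hu2]] := H q hq.
  move: hu1; rewrite /Fw; case E: (bpath p u) => [p1|] // _.
  have /norm1 /(connect_bpath sd1) [v hv] := bpath_connect E.
  exists (u ++ v) => _; split; first by rewrite bpath_cat E.
  by exists (size u); rewrite ?size_cat ?leq_addr // take_size_cat.
pose blk q := proj1_sig (constructive_indefinite_description _ (hb q)).
have hblk : forall q, Leq p q -> bpath p (blk q) = Some p /\
    exists2 n, n <= size (blk q) & ~~ Fw q (take n (blk q)).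
  move=> q; exact: (proj2_sig (constructive_indefinite_description _ (hb q))).
pose fix pre n := if n is m.+1 then pre m ++ blk (f2 (pre m)) else x0.
have hpre : forall n, exists2 rest, pre n = x0 ++ rest & bpath p rest = Some p.
  elim=> [|n [rest h1 h2]]; first by exists [::]; rewrite ?cats0.
  have hr : reach (q0 C1) (pre n) p.
    by rewrite h1; apply: reach_cat hx0 (bpath_reach h2).
  have [hb1 _] := hblk _ (inv _ hr).
  exists (rest ++ blk (f2 (pre n))); first by rewrite /= h1 catA.
  by rewrite bpath_cat h2.
have hreach : forall n, reach (q0 C1) (pre n) p.
  move=> n; have [rest h1 h2] := hpre n.
  by rewrite h1; apply: reach_cat hx0 (bpath_reach h2).
have hne : forall n, 0 < size (blk (f2 (pre n))).
  move=> n; have [_ [k _ hk]] := hblk _ (inv _ (hreach n)).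
  by case: (blk _) hk => //; rewrite take_nil.
have hsz : forall n, n <= size (pre n).
  elim=> // n IH /=; rewrite size_cat -addn1 leq_add //; exact: hne.
have hpref : forall n m, n <= m -> exists s, pre m = pre n ++ s.
  move=> n m /subnKC <-; elim: (m - n) => [|k [s hs]]; first by exists [::]; rewrite addn0 cats0.
  by exists (s ++ blk (f2 (pre (n + k)))); rewrite addnS /= hs catA.
have [a0 _] : exists a0 : Sigma, true.
  have [_ [k _ hk]] := hblk _ (inv _ (hreach 0)).
  by case: (blk _) hk => [|a l] //; exists a.
pose w : word Sigma := fun i => nth a0 (pre i.+1) i.
have hw : forall m i, i < size (pre m) -> w i = nth a0 (pre m) i.
  move=> m i hi; rewrite /w.
  have [s1 e1] := hpref m (maxn m i.+1) (leq_maxl _ _).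
  have [s2 e2] := hpref i.+1 (maxn m i.+1) (leq_maxr _ _).
  have := congr1 (fun s => nth a0 s i) (etrans (esym e1) e2) => /=.
  by rewrite !nth_cat hi (leq_trans (ltnSn i) (hsz i.+1)).
have hwp : forall m, Defs.prefix w (size (pre m)) = pre m.
  move=> m; apply: (@eq_from_nth _ a0); first by rewrite size_pref.
  move=> i; rewrite size_pref => hi; rewrite /Defs.prefix nth_mkseq //; exact: hw.
have hwt : forall m k, k <= size (pre m) -> Defs.prefix w k = take k (pre m).
  by move=> m k hk; rewrite -(hwp m) take_prefix.
have acc1 : accepts C1 w.
  have ew : w = wcat x0 (shift w (size x0)).
    apply: functional_extensionality => i; rewrite /wcat.
    case: (ltnP i (size x0)) => hi; last first.
      by rewrite nth_default // /shift subnKC.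
    by rewrite (hw 0 i) //= (set_nth_default a0).
  rewrite /accepts ew (acc_reach sem1 _ hx0).
  apply: safe_closure => k.
  have [rest e1 e2] := hpre (size x0 + k).
  have hk : size x0 + k <= size (pre (size x0 + k)) by exact: hsz.
  have := hwt _ _ hk; rewrite prefix_add (hwt 0) ?leqnn //= take_size e1 takeD.
  rewrite take_size_cat // drop_size_cat // => /cat_cancel ->.
  by apply: Fw_take; rewrite /Fw e2.
have /(f2acc w) [N hN] : accepts_from (q0 C2) w by apply/hl.
set M := size (pre N).
have [hb1 [n hn1 hn2]] := hblk _ (inv _ (hreach N)).
have hrun := strat_run w f20 f2s.
have := run_bpath sd2 (N := M) (k := n) hrun.
have hM : Defs.prefix (shift w M) n = take n (blk (f2 (pre N))).
  have hk : M + n <= size (pre N.+1) by rewrite /= size_cat leq_add2l.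
  have := hwt _ _ hk; rewrite prefix_add hwp /= takeD take_size_cat //.
  by rewrite drop_size_cat // => /cat_cancel.
rewrite hM hwp => h; move: hn2; rewrite /Fw h //.
by move=> i /andP[hi _]; apply: hN; rewrite (leq_trans (hsz N) hi).
Qed.

End Dom.

Section Min.
Variables (Sigma : finType) (A : tNCW Sigma).
Hypotheses (nA : nice A) (amA : alpha_maximal A) (minA : minimal_GFG A).
Local Notation Q := (state A).

Lemma centr (p p' : Q) : equiv_st p p' -> (forall u, Fw p u -> Fw p' u) ->
  connect (@bar_edge _ A) p' p.
Proof.
case: (nA) => _ [_ [norm [sd sem]]] hpp hF.
apply: NNPP => hn.
pose comp := [set s | connect (@bar_edge _ A) p s].
have hg : forall s : Q, exists t : Q, (s \notin comp -> t = s) /\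
    (s \in comp -> equiv_st s t /\ (forall u, Fw s u -> Fw t u) /\ t \notin comp).
  move=> s; case hs: (s \in comp); last by exists s.
  move: (hs); rewrite inE => /(connect_bpath sd)[u hu].
  have := hF u; rewrite /Fw hu => /(_ isT).
  case E: (bpath p' u) => [s'|] // _.
  exists s'; split => // _; split.
    exact: (Leq_reach sem sem hpp (bpath_reach hu) (bpath_reach E)).
  split; first by move=> v hv; have := hF (u ++ v); rewrite /Fw !bpath_cat hu E /=; apply.
  rewrite inE; apply/negP => hps'; apply: hn.
  exact: connect_trans (bpath_connect E) (norm _ _ hps').
pose g s := proj1_sig (constructive_indefinite_description _ (hg s)).
have hgs : forall s, (s \notin comp -> g s = s) /\
    (s \in comp -> equiv_st s (g s) /\ (forall u, Fw s u -> Fw (g s) u) /\ g s \notin comp).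
  move=> s; exact: (proj2_sig (constructive_indefinite_description _ (hg s))).
have hR : forall s, g s \in ~: comp.
  move=> s; rewrite inE; case hs: (s \in comp); first by case: (hgs s) => _ /(_ hs) [_ []].
  by case: (hgs s) => -> //; rewrite hs.
have h1 : forall s, equiv_st s (g s).
  move=> s; case hs: (s \in comp); first by case: (hgs s) => _ /(_ hs) [].
  by case: (hgs s) => -> //; rewrite hs.
have h2 : forall s u, Fw s u -> Fw (g s) u.
  move=> s; case hs: (s \in comp); first by case: (hgs s) => _ /(_ hs) [_ []].
  by case: (hgs s) => -> //; rewrite hs.
have h3 : forall t a s, t \in ~: comp -> s \in delta_bar t a -> forall u, Fw (g s) u -> Fw s u.
  move=> t a s ht hs u; case: (hgs s) => -> //.
  rewrite inE; apply/negP => hps; move: ht; rewrite !inE => /negP; apply.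
  apply: connect_trans hps (norm _ _ _); apply: connect1; apply/existsP; by exists a.
have := @reduce _ A nA amA _ g hR h1 h2 h3 minA p.
by rewrite !inE connect0.
Qed.

Lemma safemin (p p' : Q) : equiv_st p p' -> (forall u, Fw p u = Fw p' u) -> p = p'.
Proof.
move=> hpp hF; apply: NNPP => hn.
pose g s := if s == p' then p else s.
have hR : forall s, g s \in [set s | s != p'].
  by move=> s; rewrite inE /g; case: ifP => [_|/negbT //]; exact/eqP.
have h1 : forall s, equiv_st s (g s).
  move=> s w; rewrite /g; case: ifP => // /eqP ->; by rewrite hpp.
have h2 : forall s u, Fw s u -> Fw (g s) u.
  by move=> s u; rewrite /g; case: ifP => // /eqP ->; rewrite hF.
have h3 : forall t a s, t \in [set s | s != p'] -> s \in delta_bar t a -> forall u, Fw (g s) u -> Fw s u.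
  by move=> t a s _ _ u; rewrite /g; case: ifP => // /eqP ->; rewrite hF.
have := @reduce _ A nA amA _ g hR h1 h2 h3 minA p'.
by rewrite inE eqxx.
Qed.

End Min.

Lemma Fw_succ (Sigma : finType) (X : tNCW Sigma) (q s : state X) a v :
  safe_det X -> s \in delta_bar q a -> Fw q (a :: v) = Fw s v.
Proof. by move=> sd hs; rewrite /Fw /= (bstep_eq sd hs). Qed.

Lemma in_dalpha (Sigma : finType) (X : tNCW Sigma) (q s : state X) a :
  (s \in delta_alpha q a) = (s \in delta q a) && (s \notin delta_bar q a).
Proof. by rewrite !inE; case: (s \in delta q a); case: (alpha q a s). Qed.

Section Main.
Variables (Sigma : finType) (C1 C2 : tNCW Sigma).
Hypotheses (n1 : nice C1) (n2 : nice C2) (hl : same_lang C1 C2).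
Hypotheses (m1 : minimal_GFG C1) (m2 : minimal_GFG C2).
Hypotheses (a1 : alpha_maximal C1) (a2 : alpha_maximal C2).

Lemma hl' : same_lang C2 C1.
Proof. by move=> w; rewrite hl. Qed.

Lemma match1 (p : state C1) : exists q : state C2, Leq p q /\ forall u, Fw p u = Fw q u.
Proof.
have sem1 : sem_det C1 by case: n1 => _ [_ [_ []]].
have sem2 : sem_det C2 by case: n2 => _ [_ [_ []]].
have sd1 : safe_det C1 by case: n1 => _ [_ [_ []]].
have sd2 : safe_det C2 by case: n2 => _ [_ [_ []]].
have hh : forall p : state C1, exists p' : state C1, exists q : state C2,
    [/\ Leq p q, (forall u, Fw p u -> Fw q u), Leq q p' & (forall u, Fw q u -> Fw p' u)].
  move=> x; have [q [hq1 hq2]] := dominate n1 n2 hl x.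
  have [x' [hx1 hx2]] := dominate n2 n1 hl' q.
  by exists x', q.
pose h x := proj1_sig (constructive_indefinite_description _ (hh x)).
have hhx : forall x, exists q : state C2,
    [/\ Leq x q, (forall u, Fw x u -> Fw q u), Leq q (h x) & (forall u, Fw q u -> Fw (h x) u)].
  move=> x; exact: (proj2_sig (constructive_indefinite_description _ (hh x))).
have hstep : forall x, equiv_st x (h x) /\ (forall u, Fw x u -> Fw (h x) u) /\
    connect (@bar_edge _ C1) (h x) x.
  move=> x; have [q [e1 f1 e2 f2]] := hhx x.
  have e : equiv_st x (h x) by move=> w; rewrite e1 e2.
  have f : forall u, Fw x u -> Fw (h x) u by move=> u /f1 /f2.
  by split => //; split => //; exact: centr.
pose x i := iter i h p.
have [i [j [hij eij]]] : exists i j, i < j /\ x i = x j.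
  have : ~~ injectiveb (fun k : 'I_(#|state C1|.+1) => x k).
    apply/negP => /injectiveP /leq_card; by rewrite card_ord ltnn.
  move/injectivePn => [k1 [k2 hne he]].
  case: (ltngtP k1 k2) => hk.
  - by exists k1, k2.
  - by exists k2, k1.
  - by move: hne; rewrite -val_eqE /= hk eqxx.
have chain : forall a k, a <= k -> equiv_st (x a) (x k) /\ forall u, Fw (x a) u -> Fw (x k) u.
  move=> a k /subnKC <-; elim: (k - a) => [|n [IH1 IH2]]; first by rewrite addn0.
  rewrite addnS /x iterS -/(x (a + n)).
  have [e [f _]] := hstep (x (a + n)).
  split; first by move=> w; rewrite IH1 e.
  by move=> u /IH2 /f.
have conn : forall k, connect (@bar_edge _ C1) (x k) p.
  elim=> [|k IH]; first exact: connect0.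
  by rewrite /x iterS; apply: connect_trans IH; case: (hstep (x k)) => _ [].
have [q [e1 f1 e2 f2]] := hhx (x i).
have hF : forall u, Fw (x i) u = Fw q u.
  move=> u; apply/idP/idP; first exact: f1.
  move/f2; rewrite /x -iterS -/(x i.+1) => /((chain _ _ hij).2).
  by rewrite -eij.
have [u hu] := connect_bpath sd1 (conn i).
have := hF u; rewrite /Fw hu /=.
case E: (bpath q u) => [q'|] // _.
exists q'; split; first exact: (Leq_reach sem1 sem2 e1 (bpath_reach hu) (bpath_reach E)).
by move=> v; have := hF (u ++ v); rewrite /Fw !bpath_cat hu E.
Qed.
End Main.
Unset Implicit Arguments.
Set Strict Implicit.

Theorem mainTheorem3 (Sigma : finType) (C1 C2 : tNCW Sigma) :
  GFG C1 -> GFG C2 -> nice C1 -> nice C2 ->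
  same_lang C1 C2 ->
  minimal_GFG C1 -> minimal_GFG C2 ->
  alpha_maximal C1 -> alpha_maximal C2 ->
  isomorphic C1 C2.
Proof.
move=> g1 g2 n1 n2 hl m1 m2 a1 a2.
have sem1 : sem_det C1 by case: n1 => _ [_ [_ []]].
have sem2 : sem_det C2 by case: n2 => _ [_ [_ []]].
have sd1 : safe_det C1 by case: n1 => _ [_ [_ []]].
have sd2 : safe_det C2 by case: n2 => _ [_ [_ []]].
pose k p := proj1_sig (constructive_indefinite_description _ (match1 n1 n2 hl m1 a1 p)).
have hk : forall p, Leq p (k p) /\ forall u, Fw p u = Fw (k p) u.
  move=> p; exact: (proj2_sig (constructive_indefinite_description _ (match1 n1 n2 hl m1 a1 p))).
have kinj : injective k.
  move=> p1 p2 he; apply: (safemin n1 a1 m1).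
    by move=> w; rewrite (hk p1).1 he -(hk p2).1.
  by move=> u; rewrite (hk p1).2 he -(hk p2).2.
have kbij : bijective k by apply: inj_card_bij kinj (m2 C1 g1 hl).
have hdel : forall q q' a, (q' \in delta q a) = (k q' \in delta (k q) a).
  move=> q q' a; apply/idP/idP.
    move/(delta_char sem1 a1) => h; apply/(delta_char sem2 a2) => w.
    by rewrite -(hk q').1 h (hk q).1.
  move/(delta_char sem2 a2) => h; apply/(delta_char sem1 a1) => w.
  by rewrite (hk q').1 h -(hk q).1.
have hbar : forall q q' a, (q' \in delta_bar q a) = (k q' \in delta_bar (k q) a).
  move=> q q' a; apply/idP/idP => hq'.
    have : Fw q [:: a] by rewrite (Fw_succ _ sd1 hq').
    rewrite (hk q).2 => /(Fw_cons sd2) [t ht _].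
    suff -> : k q' = t by [].
    have htd : t \in delta (k q) a by move: ht; rewrite in_dbar => /andP[].
    have hqd : q' \in delta q a by move: hq'; rewrite in_dbar => /andP[].
    apply: (safemin n2 a2 m2).
      move=> w; rewrite -(hk q').1 ((delta_char sem1 a1 q q' a).1 hqd w).
      rewrite (hk q).1; symmetry; exact: (delta_char sem2 a2 _ _ _).1.
    move=> v; rewrite -(hk q').2 -(Fw_succ _ sd1 hq') (hk q).2.
    exact: Fw_succ.
  have : Fw (k q) [:: a] by rewrite (Fw_succ _ sd2 hq').
  rewrite -(hk q).2 => /(Fw_cons sd1) [t ht _].
  suff -> : q' = t by [].
  have htd : t \in delta q a by move: ht; rewrite in_dbar => /andP[].
  have hqd : k q' \in delta (k q) a by move: hq'; rewrite in_dbar => /andP[].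
  apply: (safemin n1 a1 m1).
    move=> w; rewrite (hk q').1 ((delta_char sem2 a2 (k q) (k q') a).1 hqd w).
    rewrite -(hk q).1; symmetry; exact: (delta_char sem1 a1 _ _ _).1.
  move=> v; rewrite (hk q').2 -(Fw_succ _ sd2 hq') -(hk q).2.
  exact: Fw_succ.
exists k; split => //; split => q q' a.
  by rewrite hbar.
by rewrite !in_dalpha hdel hbar.
Qed.
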